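(* Let $T$ be a set of SGD iterations with $T\subseteq\{s:s\ge\tau\}$, where Assumption 1 holds with constants $\tau,\gamma$, let $t\in T$, and let $\mathcal R_{\mathbf x}$ be a linear region of $f^{(t)}$. Suppose there exists $\mathbf k\in\mathbb R^{|T|}$ such that $$\prod_{l=d-1}^{1}[\mathbf S_l^{(t)}(\mathbf x)](i_l,i_l)=\sum_{k\in T}\mathbf k(k)\prod_{l=d-1}^{1}[\mathbf S_l^{(k)}(\mathbf x^{(k)})](i_l,i_l)$$ for all $i_l\in\{1,\dots,n_l\}$, $l=1,\dots,d-1$. Then $f^{(t)}$ is Lipschitz on $\mathcal R_{\mathbf x}$ with $$\lambda_{f^{(t)}}(\mathcal R_{\mathbf x})\le(1+\gamma)\sum_{k\in T}|\mathbf k(k)|\,\frac{|\mathbf S_d^{(t)}(\mathbf x)|}{|\mathbf S_d^{(t)}(\mathbf x^{(k)})|}\,\lambda_{f^{(k)}}(\mathcal R_{\mathbf x^{(k)}}),$$ where $\mathbf S_d^{(t)}(\mathbf z)=\rho_d'(u)$ evaluated at $u=\mathbf W_d^{(t)}f_{d-1}^{(t)}\circ\cdots\circ f_1^{(t)}(\mathbf z)+\mathbf b_d^{(t)}$.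
   Context: Network: $f(\mathbf x,\mathbf w)=f_d\circ\cdots\circ f_1(\mathbf x)$ with $f_l(\mathbf x)=\rho_l(\mathbf W_l\mathbf x+\mathbf b_l)$, $\mathbf W_l\in\mathbb R^{n_l\times n_{l-1}}$, $n_0=n$, $n_d=1$; $\rho_l$ ReLU for $l<d$, $\rho_d$ identity or sigmoid. SGD on training set $X$: at iteration $s$ a point $\mathbf x^{(s)}\in X$ is sampled and parameters updated by a gradient step; $f^{(s)}$ is the network with parameters $\mathbf W_l^{(s)},\mathbf b_l^{(s)}$. Activation matrices $\mathbf S_l^{(s)}(\mathbf x)=\mathrm{diag}(\mathbb 1[f_l\circ\cdots\circ f_1(\mathbf x,\mathbf w^{(s)})>0])$ for $l<d$. Local Lipschitz constant on the linear region $\mathcal R_{\mathbf x}$: $\lambda_{f^{(s)}}(\mathcal R_{\mathbf x}):=\|\mathbf S_d^{(s)}(\mathbf x)\mathbf W_d^{(s)}\mathbf S_{d-1}^{(s)}(\mathbf x)\cdots\mathbf S_1^{(s)}(\mathbf x)\mathbf W_1^{(s)}\|_2$. Activation vector $\mathbf s_s(\mathbf x):=\bigotimes_{l=d-1}^1\mathrm{diag}(\mathbf S_l^{(s)}(\mathbf x))$. Assumption 1: there exist $\tau,\gamma>0$ such that $\mathbf s_s(\mathbf x)=\mathbf s_{s'}(\mathbf x)$ and $\lambda_{f^{(s)}}(\mathcal R_{\mathbf x})\le(1+\gamma)\lambda_{f^{(s')}}(\mathcal R_{\mathbf x})$ for all $\mathbf x\in X$ and $s,s'\ge\tau$. *)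

(* Defs.v *)
From HB Require Import structures.
From mathcomp Require Import all_boot all_order all_algebra.
From mathcomp Require Import all_classical all_reals all_analysis.
Set Implicit Arguments. Unset Strict Implicit. Unset Printing Implicit Defensive.
Import Order.TTheory GRing.Theory Num.Theory.
Local Open Scope ring_scope.
Local Open Scope classical_set_scope.

(* Network f = f_d o ... o f_1 with L := d-1 hidden ReLU layers.
   Widths: n 0 = input dimension, n l = width of hidden layer l (1 <= l <= L),
   n_d = 1 (output layer is a 1 x n L row vector plus a scalar bias).
   Hidden layer l+1 (paper index) has weight W l : 'M_(n l.+1, n l) and
   bias b l : 'cV_(n l.+1) (0-based field index l). *)
Record params (R : realType) (n : nat -> nat) (L : nat) := Params {
  W : forall l : nat, 'M[R]_(n l.+1, n l);
  b : forall l : nat, 'cV[R]_(n l.+1);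
  Wd : 'rV[R]_(n L);
  bd : R }.

Section Net.
Variables (R : realType) (n : nat -> nat) (L : nat).

Definition relu (a : R) : R := Num.max a 0.

Fixpoint hidden (p : params R n L) (x : 'cV[R]_(n 0)) (l : nat) : 'cV[R]_(n l) :=
  match l with
  | 0 => x
  | l'.+1 => map_mx relu (W p l' *m hidden p x l' + b p l')
  end.

(* Activation matrix S_{l+1}(x) = diag(1[f_{l+1} o ... o f_1 (x) > 0]) *)
Definition Sact (p : params R n L) (x : 'cV[R]_(n 0)) (l : nat) : 'M[R]_(n l.+1) :=
  diag_mx (\row_j (if 0 < hidden p x l.+1 j 0 then 1 else 0)).

Definition outpre (p : params R n L) (x : 'cV[R]_(n 0)) : R :=
  (Wd p *m hidden p x L) 0 0 + bd p.

Fixpoint chain (p : params R n L) (x : 'cV[R]_(n 0)) (l : nat) : 'M[R]_(n l, n 0) :=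
  match l with
  | 0 => 1%:M
  | l'.+1 => Sact p x l' *m W p l' *m chain p x l'
  end.
End Net.

Inductive outact := OutId | OutSigmoid.

Definition sigmoid {R : realType} (u : R) : R := (1 + expR (- u))^-1.

Definition rho_d' {R : realType} (a : outact) (u : R) : R :=
  match a with
  | OutId => 1
  | OutSigmoid => sigmoid u * (1 - sigmoid u)
  end.

Definition Sd {R : realType} {n L} (a : outact) (p : params R n L)
  (x : 'cV[R]_(n 0)) : R := rho_d' a (outpre p x).

Definition vnorm {R : realType} {m} (v : 'cV[R]_m) : R :=
  Num.sqrt (\sum_i v i 0 ^+ 2).

Definition spec_norm {R : realType} {m k} (A : 'M[R]_(m, k)) : R :=
  sup [set vnorm (A *m v) | v in [set v : 'cV[R]_k | vnorm v <= 1]].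

(* local Lipschitz constant on the linear region R_x:
   || S_d W_d S_{d-1} W_{d-1} ... S_1 W_1 ||_2 *)
Definition lambda {R : realType} {n L} (a : outact) (p : params R n L)
  (x : 'cV[R]_(n 0)) : R :=
  spec_norm ((Sd a p x)%:M *m Wd p *m chain p x L).

Definition mindex (n : nat -> nat) (L : nat) := forall l : 'I_L, 'I_(n l.+1).

(* Entry of the activation vector s(x) = (x)_{l=d-1}^{1} diag(S_l(x))
   at multi-index i:  prod_l [S_l(x)](i_l, i_l) *)
Definition actvec {R : realType} {n L} (p : params R n L) (x : 'cV[R]_(n 0))
  (i : mindex n L) : R :=
  \prod_(l < L) Sact p x l (i l) (i l).

Definition assumption1 {R : realType} {n L} (a : outact)
  (w : nat -> params R n L) (X : 'cV[R]_(n 0) -> Prop) (tau : nat) (gamma : R) :=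
  (0 < tau)%N /\ 0 < gamma /\
  forall x, X x -> forall s s', (tau <= s)%N -> (tau <= s')%N ->
    actvec (w s) x = actvec (w s') x /\
    lambda a (w s) x <= (1 + gamma) * lambda a (w s') x.

(* Main.v *)
Require Import Defs.
From HB Require Import structures.
From mathcomp Require Import all_boot all_order all_algebra.
From mathcomp Require Import all_classical all_reals all_analysis.
From mathcomp Require Import ring lra.
Import Order.TTheory GRing.Theory Num.Theory.
Local Open Scope ring_scope.
Local Open Scope classical_set_scope.

Lemma eqm_aux m (l : 'I_m.+1) : (m <= l)%N -> nat_of_ord l = m.
Proof. by move=> H; apply/eqP; rewrite eqn_leq H -ltnS ltn_ord. Qed.

Definition ext (n : nat -> nat) m (i : forall l : 'I_m, 'I_(n l.+1)) (a : 'I_(n m.+1))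
  : forall l : 'I_m.+1, 'I_(n l.+1) :=
  fun l => match ltnP l m with
  | LtnNotGeq H => i (Ordinal H)
  | GeqNotLtn H => @Ordinal (n l.+1) (val a) (eq_ind_r (fun k => (val a < n k.+1)%N) (ltn_ord a) (@eqm_aux m l H))
  end.

Lemma ext_max n m i a : @ext n m i a ord_max = a.
Proof.
apply/val_inj; rewrite /ext; case: ltnP => H //=.
by exfalso; move: H; rewrite ltnn.
Qed.

Lemma ext_widen n m i a (l : 'I_m) : @ext n m i a (widen_ord (leqnSn m) l) = i l.
Proof.
rewrite /ext; case: ltnP => H /=.
  case: l H => l' Hl' H /=. by rewrite (bool_irrelevance H Hl').
by exfalso; move: H; rewrite leqNgt /= ltn_ord.
Qed.

Fixpoint chainD (R : realType) (n : nat -> nat) (W : forall l, 'M[R]_(n l.+1, n l))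
  (d : forall l, 'rV[R]_(n l.+1)) (l : nat) : 'M[R]_(n l, n 0) :=
  match l with
  | 0 => 1%:M
  | l'.+1 => diag_mx (d l') *m W l' *m chainD R n W d l'
  end.

Lemma expand (R : realType) (n : nat -> nat) (W : forall l, 'M[R]_(n l.+1, n l)) m
  (I : Type) (K : seq I) (c : I -> R) (dk : I -> forall l, 'rV[R]_(n l.+1))
  (c0 : R) (d0 : forall l, 'rV[R]_(n l.+1)) :
  (forall i : forall l : 'I_m, 'I_(n l.+1),
     \sum_(k <- K) c k * \prod_(l < m) dk k l 0 (i l) = c0 * \prod_(l < m) d0 l 0 (i l)) ->
  forall r : 'rV[R]_(n m),
  \sum_(k <- K) c k *: (r *m chainD R n W (dk k) m) = c0 *: (r *m chainD R n W d0 m).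
Proof.
elim: m c c0 => [|m IH] c c0 H r /=.
  have i0 : forall l : 'I_0, 'I_(n l.+1) by case.
  have E : \sum_(k <- K) c k * \prod_(l < 0) dk k l 0 (i0 l) = \sum_(k <- K) c k.
    by apply: eq_bigr => k _; rewrite big_ord0 mulr1.
  move: (H i0); rewrite E big_ord0 mulr1 => <-.
  by rewrite scaler_suml.
under eq_bigr => k _ do rewrite diag_mx_sum_delta !mulmx_suml !mulmx_sumr scaler_sumr.
rewrite diag_mx_sum_delta !mulmx_suml !mulmx_sumr scaler_sumr.
rewrite exchange_big /=; apply: eq_bigr => a _.
under eq_bigr => k _ do rewrite -!scalemxAl -!scalemxAr scalerA.
rewrite -!scalemxAl -!scalemxAr scalerA.
rewrite -!mulmxA (mulmxA r) (mulmxA (r *m _)).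
under eq_bigr => k _ do rewrite -!mulmxA (mulmxA r) (mulmxA (r *m _)).
apply: (IH (fun k => c k * dk k m 0 a) (c0 * d0 m 0 a)) => i.
move: (H (@ext n m i a)).
under eq_bigr => k _ do rewrite big_ord_recr /= ext_max.
rewrite big_ord_recr /= ext_max.
under eq_bigr => k _ do (under eq_bigr => l _ do rewrite ext_widen).
have -> : \prod_(l < m) d0 l 0 (@ext n m i a (widen_ord (leqnSn m) l)) = \prod_(l < m) d0 l 0 (i l).
  by apply: eq_bigr => l _; rewrite ext_widen.
rewrite (mulrC (\prod_(l < m) d0 l 0 (i l))) mulrA => <-.
by apply: eq_bigr => k _; rewrite mulrA mulrAC.
Qed.
Section N.
Variable R : realType.

Lemma sumsq_ge0 m (v : 'cV[R]_m) : 0 <= \sum_i v i 0 ^+ 2.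
Proof. by apply: sumr_ge0 => i _; rewrite sqr_ge0. Qed.

Lemma vnorm_ge0 m (v : 'cV[R]_m) : 0 <= vnorm v.
Proof. exact: sqrtr_ge0. Qed.

Lemma vnormZ m (s : R) (v : 'cV[R]_m) : vnorm (s *: v) = `|s| * vnorm v.
Proof.
rewrite /vnorm -sqrtr_sqr -sqrtrM ?sqr_ge0 // mulr_sumr; congr Num.sqrt.
by apply: eq_bigr => i _; rewrite mxE exprMn.
Qed.

Lemma vnorm0 m : vnorm (0 : 'cV[R]_m) = 0.
Proof.
rewrite /vnorm big1 ?sqrtr0 // => i _; by rewrite mxE expr0n.
Qed.

Lemma dsum m (f g : 'I_m -> R) :
  \sum_i \sum_j f i * g j = (\sum_i f i) * (\sum_j g j).
Proof. by rewrite mulr_suml; apply: eq_bigr => i _; rewrite mulr_sumr. Qed.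

Lemma CS m (u v : 'cV[R]_m) :
  (\sum_i u i 0 * v i 0) ^+ 2 <= (\sum_i u i 0 ^+ 2) * (\sum_i v i 0 ^+ 2).
Proof.
have H : 0 <= \sum_i \sum_j (u i 0 * v j 0 - u j 0 * v i 0) ^+ 2.
  by apply: sumr_ge0 => i _; apply: sumr_ge0 => j _; rewrite sqr_ge0.
have E : \sum_i \sum_j (u i 0 * v j 0 - u j 0 * v i 0) ^+ 2 =
   2%:R * ((\sum_i u i 0 ^+ 2) * (\sum_i v i 0 ^+ 2) - (\sum_i u i 0 * v i 0) ^+ 2).
  have e : forall i j, (u i 0 * v j 0 - u j 0 * v i 0) ^+ 2 =
     (u i 0 ^+ 2 * v j 0 ^+ 2 + v i 0 ^+ 2 * u j 0 ^+ 2) - 2%:R * ((u i 0 * v i 0) * (u j 0 * v j 0)).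
    by move=> i j; ring.
  under eq_bigr => i _ do under eq_bigr => j _ do rewrite e.
  under eq_bigr => i _ do rewrite sumrB big_split /= -!mulr_sumr.
  rewrite sumrB big_split /= -!mulr_sumr -!mulr_suml.
  rewrite expr2; ring.
rewrite -subr_ge0; move: H; rewrite E pmulr_rge0 //.
Qed.

Lemma vnormD m (u v : 'cV[R]_m) : vnorm (u + v) <= vnorm u + vnorm v.
Proof.
set A := \sum_i u i 0 ^+ 2; set B := \sum_i v i 0 ^+ 2; set C := \sum_i u i 0 * v i 0.
have A0 : 0 <= A by apply: sumsq_ge0.
have B0 : 0 <= B by apply: sumsq_ge0.
have HC : C <= Num.sqrt A * Num.sqrt B.
  apply: (le_trans (ler_norm C)).
  rewrite -sqrtr_sqr -sqrtrM // ler_sqrt ?mulr_ge0 //; exact: CS.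
have E : \sum_i (u + v) i 0 ^+ 2 = A + 2%:R * C + B.
  rewrite /A /B /C mulr_sumr -!big_split /=; apply: eq_bigr => i _; rewrite mxE; ring.
rewrite /vnorm E -/A -/B.
have P : 0 <= Num.sqrt A + Num.sqrt B by rewrite addr_ge0 ?sqrtr_ge0.
rewrite -(ger0_norm P) -sqrtr_sqr ler_sqrt ?sqr_ge0 //.
rewrite sqrrD !sqr_sqrtr //.
have : 2%:R * C <= 2%:R * (Num.sqrt A * Num.sqrt B) by rewrite ler_pM2l.
lra.
Qed.

Lemma vnorm_sum (I : Type) (r : seq I) m (F : I -> 'cV[R]_m) :
  vnorm (\sum_(k <- r) F k) <= \sum_(k <- r) vnorm (F k).
Proof.
elim: r => [|k r IH]; first by rewrite !big_nil vnorm0.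
rewrite !big_cons; apply: (le_trans (vnormD _ _ _)); exact: lerD.
Qed.

Lemma vnorm_coord m (v : 'cV[R]_m) i : `|v i 0| <= vnorm v.
Proof.
rewrite -sqrtr_sqr ler_sqrt ?sumsq_ge0 // (bigD1 i) //= lerDl.
by apply: sumr_ge0 => j _; rewrite sqr_ge0.
Qed.

Definition sset m k (A : 'M[R]_(m, k)) :=
  [set vnorm (A *m v) | v in [set v : 'cV[R]_k | vnorm v <= 1]].

Arguments sset {m k}.

Lemma sset_n0 m k (A : 'M[R]_(m, k)) : sset A !=set0.
Proof. by exists (vnorm (A *m 0)), 0 => //=; rewrite vnorm0. Qed.

Lemma sset_bnd m k (A : 'M[R]_(m, k)) : has_sup (sset A).
Proof.
split; first exact: sset_n0.
exists (\sum_(j < k) vnorm (A *m delta_mx j 0)) => _ [v /= Hv <-].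
have -> : A *m v = \sum_(j < k) v j 0 *: (A *m delta_mx j 0).
  by rewrite {1}(matrix_sum_delta v) mulmx_sumr; apply: eq_bigr => j _;
     rewrite big_ord1 -scalemxAr.
apply: (le_trans (vnorm_sum _ _ _ _)); apply: ler_sum => j _.
rewrite vnormZ ler_piMl ?vnorm_ge0 //.
exact: le_trans (vnorm_coord _ _ _) Hv.
Qed.

Lemma spec_ub m k (A : 'M[R]_(m, k)) v : vnorm v <= 1 -> vnorm (A *m v) <= spec_norm A.
Proof. by move=> Hv; rewrite /spec_norm; apply: (sup_upper_bound (sset_bnd _ _ A)); exists v. Qed.

Lemma spec_le m k (A : 'M[R]_(m, k)) b :
  (forall v, vnorm v <= 1 -> vnorm (A *m v) <= b) -> spec_norm A <= b.
Proof. by move=> H; apply: ge_sup; [exact: sset_n0 | move=> _ [v /= Hv <-]; exact: H]. Qed.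

Lemma specZ_le m k (s : R) (A : 'M[R]_(m, k)) : spec_norm (s *: A) <= `|s| * spec_norm A.
Proof.
apply: spec_le => v Hv; rewrite -scalemxAl vnormZ ler_wpM2l //; exact: spec_ub.
Qed.

Lemma specZ_ge m k (s : R) (A : 'M[R]_(m, k)) : s != 0 -> `|s| * spec_norm A <= spec_norm (s *: A).
Proof.
move=> s0; have := specZ_le _ _ s^-1 (s *: A); rewrite scalerA mulVf // scale1r => H.
rewrite -(ler_pM2l (_ : 0 < `|s|^-1)) ?invr_gt0 ?normr_gt0 //.
by rewrite mulrA mulVf ?normr_eq0 // mul1r -normfV.
Qed.

Lemma specD_le m k (A B : 'M[R]_(m, k)) : spec_norm (A + B) <= spec_norm A + spec_norm B.
Proof.
apply: spec_le => v Hv; rewrite mulmxDl; apply: (le_trans (vnormD _ _ _)).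
by apply: lerD; apply: spec_ub.
Qed.

Lemma spec_sum_le (I : Type) (r : seq I) m k (F : I -> 'M[R]_(m, k)) :
  spec_norm (\sum_(i <- r) F i) <= \sum_(i <- r) spec_norm (F i).
Proof.
elim: r => [|i r IH]; rewrite ?big_nil ?big_cons.
  by apply: spec_le => v _; rewrite mul0mx vnorm0.
by apply: (le_trans (specD_le _ _ _ _)); rewrite lerD2l.
Qed.
End N.

Lemma Sd_neq0 (R : realType) n L a (p : params R n L) z : Sd a p z != 0.
Proof.
rewrite /Sd; case: a => /=; first exact: oner_neq0.
rewrite /sigmoid; set e := expR _.
have e0 : 0 < e by apply: expR_gt0.
have s0 : 0 < (1 + e)^-1 by rewrite invr_gt0; lra.
have s1 : (1 + e)^-1 < 1 by rewrite invf_lt1; lra.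
by apply: lt0r_neq0; apply: mulr_gt0 => //; rewrite subr_gt0.
Qed.

Definition dv (R : realType) n L (p : params R n L) z : forall l, 'rV[R]_(n l.+1) :=
  fun l => \row_j (if 0 < hidden p z l.+1 j 0 then 1 else 0).

Arguments dv {R n L}.

Lemma chain_D (R : realType) n L (p : params R n L) z l :
  chain p z l = chainD R n (W p) (dv p z) l.
Proof. by elim: l => //= l ->. Qed.

Lemma actvec_D (R : realType) n L (p : params R n L) z (i : mindex n L) :
  actvec p z i = \prod_(l < L) dv p z l 0 (i l).
Proof. by apply: eq_bigr => l _; rewrite /Sact mxE eqxx mulr1n. Qed.

Lemma lambda_D (R : realType) n L a (p : params R n L) z :
  lambda a p z = spec_norm (Sd a p z *: (Wd p *m chain p z L)).
Proof. by rewrite /lambda mul_scalar_mx -scalemxAl. Qed.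

Theorem lemma2 (R : realType) (n : nat -> nat) (L : nat) (a : outact)
  (X : 'cV[R]_(n 0) -> Prop)
  (w : nat -> params R n L) (xs : nat -> 'cV[R]_(n 0))
  (tau : nat) (gamma : R)
  (T : seq nat) (t : nat) (x : 'cV[R]_(n 0)) (kappa : nat -> R) :
  (forall s, X (xs s)) ->
  assumption1 a w X tau gamma ->
  uniq T -> (forall k, k \in T -> (tau <= k)%N) -> t \in T ->
  (forall i : mindex n L,
     actvec (w t) x i = \sum_(k <- T) kappa k * actvec (w k) (xs k) i) ->
  lambda a (w t) x <=
    (1 + gamma) * \sum_(k <- T)
       `|kappa k| * (`|Sd a (w t) x| / `|Sd a (w t) (xs k)|) * lambda a (w k) (xs k).
Proof.
move=> HX [_ [g0 HA]] _ HT tT Hk.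
set p := w t.
have Hact : forall k, k \in T -> actvec (w k) (xs k) = actvec p (xs k).
  by move=> k kT; have [-> _] := HA _ (HX k) k t (HT k kT) (HT t tT).
have Hlam : forall k, k \in T -> lambda a p (xs k) <= (1 + gamma) * lambda a (w k) (xs k).
  by move=> k kT; have [_ ->] := HA _ (HX k) t k (HT t tT) (HT k kT).
set V := fun z => Wd p *m chain p z L.
have EV : V x = \sum_(k <- T) kappa k *: V (xs k).
  rewrite /V chain_D -[LHS]scale1r.
  symmetry; under eq_bigr => k _ do rewrite chain_D.
  apply: (expand R n (W p) L nat T kappa (fun k => dv p (xs k)) 1 (dv p x)) => i.
  rewrite mul1r -actvec_D Hk big_seq [RHS]big_seq; apply: eq_bigr => k kT.
  by rewrite (Hact k kT) actvec_D.
rewrite lambda_D -/(V x).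
apply: (le_trans (specZ_le _ _ _ _ _)).
have H1 : spec_norm (V x) <= \sum_(k <- T) `|kappa k| * spec_norm (V (xs k)).
  rewrite EV; apply: (le_trans (spec_sum_le _ _ _ _ _ _)).
  by apply: ler_sum => k _; apply: specZ_le.
apply: (le_trans (ler_wpM2l (normr_ge0 _) H1)).
rewrite mulr_sumr mulr_sumr big_seq [X in _ <= X]big_seq; apply: ler_sum => k kT.
have Sk0 : 0 < `|Sd a p (xs k)| by rewrite normr_gt0 Sd_neq0.
have H2 : `|Sd a p (xs k)| * spec_norm (V (xs k)) <= (1 + gamma) * lambda a (w k) (xs k).
  apply: le_trans (Hlam k kT); rewrite lambda_D; apply: specZ_ge; exact: Sd_neq0.
set q := `|Sd a p x| / `|Sd a p (xs k)|.
have q0 : 0 <= q by rewrite divr_ge0.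
have -> : `|Sd a p x| * (`|kappa k| * spec_norm (V (xs k))) =
   `|kappa k| * q * (`|Sd a p (xs k)| * spec_norm (V (xs k))).
  rewrite /q; field; exact: lt0r_neq0.
have -> : (1 + gamma) * (`|kappa k| * q * lambda a (w k) (xs k)) =
   `|kappa k| * q * ((1 + gamma) * lambda a (w k) (xs k)) by ring.
by apply: ler_wpM2l => //; rewrite mulr_ge0.
Qed.
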